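(* Let $G$ be a locally compact abelian group with compact identity component. Then the Braconnier modular function $\mathrm{mod}_G$ takes values in $\mathbb Q$.
   Context: The Braconnier modular function $\mathrm{mod}_G:\mathrm{Aut}(G)\to(0,\infty)$ is defined by $\mu(\alpha(S))=\mathrm{mod}_G(\alpha)\mu(S)$ for a Haar measure $\mu$ on $G$, all $\alpha\in\mathrm{Aut}(G)$ (bicontinuous automorphisms) and Borel sets $S$. *)

(* Defs.v *)
From HB Require Import structures.
From mathcomp Require Import all_boot all_order all_algebra.
From mathcomp Require Import all_classical all_reals all_analysis.
Set Implicit Arguments. Unset Strict Implicit. Unset Printing Implicit Defensive.
Import Order.TTheory GRing.Theory Num.Theory.
Local Open Scope classical_set_scope.
Local Open Scope ring_scope.

Definition LCA_group (G : topologicalZmodType) : Prop :=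
  hausdorff_space G /\ locally_compact [set: G].

Definition identity_component (G : topologicalZmodType) : set G :=
  connected_component [set: G] 0.

Definition pointed_group (G : topologicalZmodType) : pointedType :=
  HB.pack_for pointedType G (isPointed.Build G 0).

Definition Borel (G : topologicalZmodType) :=
  @g_sigma_algebraType (pointed_group G) (@open G).

Definition haar_measure (R : realType) (G : topologicalZmodType)
    (mu : {measure set (Borel G) -> \bar R}) : Prop :=
  [/\ (forall K : set G, compact K -> (mu K < +oo)%E),
      (forall E : set (Borel G), measurable E ->
         mu E = ereal_inf [set mu U | U in [set U : set G | open U /\ E `<=` U]]),
      (forall U : set G, open U ->
         mu U = ereal_sup [set mu K | K in [set K : set G | compact K /\ K `<=` U]]),
      (exists U : set G, open U /\ (0 < mu U)%E) &
      (forall (x : G) (E : set (Borel G)), measurable E ->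
         mu [set x + y | y in E] = mu E)].

Definition topological_automorphism (G : topologicalZmodType) (alpha : G -> G) : Prop :=
  (forall x y : G, alpha (x + y) = alpha x + alpha y) /\
  continuous alpha /\
  exists beta : G -> G,
    [/\ cancel alpha beta, cancel beta alpha & continuous beta].

(* Main.v *)
Require Import Defs.
From HB Require Import structures.
From mathcomp Require Import all_boot all_order all_algebra.
From mathcomp Require Import all_classical all_reals all_analysis.
From mathcomp Require Import finmap.
Import Order.TTheory GRing.Theory Num.Theory.
Local Open Scope classical_set_scope.
Local Open Scope ring_scope.

Lemma cover_compact_gen {T : topologicalType} {A : set T} :
  compact A -> cover_compact A.
Proof.
move=> cA; have [[a Aa]|nA] := pselect (A !=set0).
  pose T' := HB.pack_for ptopologicalType T (isPointed.Build T a).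
  have := @compact_cover T'.
  move=> e; have : @compact T' A by [].
  by rewrite e.
move=> I D f _ _; exists finmap.fset0 => // x Ax; exfalso; apply: nA; by exists x.
Qed.

Lemma open_fbigcap {T : topologicalType} (I : choiceType) (D : {fset I})
  (f : I -> set T) : (forall i, i \in D -> open (f i)) ->
  open (\bigcap_(i in [set` D]) f i).
Proof.
move=> fo; rewrite openE => p Ip; rewrite /interior.
apply: filter_bigI => i iD; apply: open_nbhs_nbhs; split; first exact: fo.
exact: Ip.
Qed.

Lemma sep_pt_compact {T : topologicalType} (K : set T) (y : T) :
  hausdorff_space T -> compact K -> ~ K y ->
  exists U V : set T, [/\ open U, open V, K `<=` U, V y & U `&` V = set0].
Proof.
move=> hT cK Ky.
have h : forall x, exists AB : set T * set T, K x ->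
    [/\ AB.1 x, AB.2 y, open AB.1, open AB.2 & AB.1 `&` AB.2 = set0].
  move=> x; have [Kx|nKx] := pselect (K x); last by exists (set0, set0).
  have xy : x != y by apply/eqP => xy; apply: Ky; rewrite -xy.
  move: hT; rewrite open_hausdorff => /(_ x y xy) [AB [xA yB] [oA oB /eqP AB0]].
  by exists AB => _; split => //; apply/set_mem.
pose g x := projT1 (cid (h x)).
have gP x : K x -> _ := projT2 (cid (h x)).
have [] := cover_compact_gen cK _ K (fun x => (g x).1).
- by move=> i Ki; case: (gP i Ki).
- by move=> x Kx; exists x => //; case: (gP x Kx).
move=> D' D'K KD'.
exists (\bigcup_(i in [set` D']) (g i).1), (\bigcap_(i in [set` D']) (g i).2).
split.
- by apply: bigcup_open => i /= /D'K/set_mem => Ki; case: (gP i Ki).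
- by apply: open_fbigcap => i /D'K/set_mem => Ki; case: (gP i Ki).
- exact: KD'.
- by move=> i /= /D'K/set_mem => Ki; case: (gP i Ki).
- apply/seteqP; split => // z [[i /= iD gi] Iz].
  have Ki : K i by exact/set_mem/D'K.
  case: (gP i Ki) => _ _ _ _ e.
  have : ((g i).1 `&` (g i).2) z by split => //; exact: Iz.
  by rewrite e.
Qed.

Lemma sep_compact {T : topologicalType} (K L : set T) :
  hausdorff_space T -> compact K -> compact L -> K `&` L = set0 ->
  exists U V : set T, [/\ open U, open V, K `<=` U, L `<=` V & U `&` V = set0].
Proof.
move=> hT cK cL KL.
have h : forall y, exists UV : set T * set T, L y ->
    [/\ open UV.1, open UV.2, K `<=` UV.1, UV.2 y & UV.1 `&` UV.2 = set0].
  move=> y; have [Ly|nLy] := pselect (L y); last by exists (set0, set0).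
  have Ky : ~ K y.
    by move=> Ky; have : (K `&` L) y by []; rewrite KL.
  have [U [V H]] := @sep_pt_compact _ K y hT cK Ky.
  by exists (U, V).
pose g x := projT1 (cid (h x)).
have gP x : L x -> _ := projT2 (cid (h x)).
have [] := cover_compact_gen cL _ L (fun x => (g x).2).
- by move=> i Li; case: (gP i Li).
- by move=> x Lx; exists x => //; case: (gP x Lx).
move=> D' D'L LD'.
exists (\bigcap_(i in [set` D']) (g i).1), (\bigcup_(i in [set` D']) (g i).2).
split.
- by apply: open_fbigcap => i /D'L/set_mem => Li; case: (gP i Li).
- by apply: bigcup_open => i /= /D'L/set_mem => Li; case: (gP i Li).
- by move=> z Kz i /= /D'L/set_mem => Li; case: (gP i Li) => _ _ + _ _; apply.
- exact: LD'.
- apply/seteqP; split => // z [Iz [i /= iD gi]].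
  have Li : L i by exact/set_mem/D'L.
  case: (gP i Li) => _ _ _ _ e.
  have : ((g i).1 `&` (g i).2) z by split => //; exact: Iz.
  by rewrite e.
Qed.

Lemma clopen_in_nbhs {T : topologicalType} (W O : set T) (x0 : T) :
  hausdorff_space T -> compact W -> open O -> O `<=` W ->
  connected_component [set: T] x0 `<=` O ->
  exists A : set T, [/\ compact A, open A, A x0 & A `<=` O].
Proof.
move=> hT cW oO OW CO.
have clW : closed W := compact_closed hT cW.
pose F (A : set T) := [/\ A `<=` W, closed A & closed (W `\` A)].
pose D := [set A | F A /\ A x0].
pose Q := \bigcap_(A in D) A.
have Wx0 : W x0 by apply/OW/CO/connected_component_refl.
have DW : D W.
  split => //; split => //; by rewrite setDv; exact: closed0.
have QW : Q `<=` W := fun z Qz => Qz W DW.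
have clQ : closed Q by apply: closed_bigI => A [[]].
have cQ : compact Q := subclosed_compact clQ cW QW.
have Qx0 : Q x0 by move=> A [].
have key : forall O', open O' -> Q `<=` O' -> exists A, D A /\ A `<=` O'.
  move=> O' oO' QO'.
  have cWO : compact (W `\` O').
    have clWO : closed (W `\` O').
      by rewrite setDE; apply: closedI => //; exact: open_closedC.
    by apply: (subclosed_compact clWO cW) => z [].
  have [] := cover_compact_gen cWO _ D (fun A => ~` A).
  - by move=> A [[_ clA _] _]; exact: closed_openC.
  - move=> z [Wz nOz]; have nQz : ~ Q z by move=> /QO'.
    move: nQz => /existsNP [A] /not_implyP [DA nAz].
    by exists A.
  move=> D' D'D WD'.
  pose A := W `&` \bigcap_(B in [set` D']) B.
  have DB : forall B, B \in D' -> D B by move=> B /D'D/set_mem.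
  exists A; split; first split; first split.
  - by move=> z [].
  - apply: closedI => //; apply: closed_bigI => B /= /DB [[]] //.
  - have -> : W `\` A = \bigcup_(B in [set` D']) (W `\` B).
      apply/seteqP; split => z.
        move=> [Wz] /not_andP [/(_ Wz) []|] /existsNP [B] /not_implyP [BD nBz].
        by exists B.
      by move=> [B /= BD [Wz nBz]]; split => // -[_] /(_ B BD).
    apply: closed_bigcup; first exact: finite_fset.
    by move=> B /= /DB [[]].
  - by split => // B /= /DB [].
  - move=> z [Wz Bz]; apply: contrapT => nOz.
    have [B /= BD' nBz] := WD' z (conj Wz nOz).
    exact: nBz (Bz B BD').
have FU : forall A U U', F A -> open U -> open U' -> U `&` U' = set0 ->
    A `<=` U `|` U' -> F (A `&` U).
  move=> A U U' [AW clA clWA] oU oU' UU' AUU'.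
  split.
  - by move=> z [/AW].
  - have -> : A `&` U = A `&` ~` U'.
      apply/seteqP; split => z [Az].
        by move=> Uz; split => // U'z; have : (U `&` U') z by []; rewrite UU'.
      by move=> nU'z; split => //; case: (AUU' z Az).
    by apply: closedI => //; exact: open_closedC.
  - have -> : W `\` (A `&` U) = (W `\` A) `|` (A `&` ~` U).
      apply/seteqP; split => z.
        move=> [Wz] /not_andP [nAz|nUz]; first by left.
        by have [Az|nAz] := pselect (A z); [right|left].
      by move=> [[Wz nAz]|[Az nUz]]; split => //; [move=> [] | apply/AW| move=> []].
    by apply: closedU => //; apply: closedI => //; exact: open_closedC.
have Qconn : connected Q.
  move=> B [b Bb] [C oC BQC] [C' clC' BQC'].
  pose P1 := Q `&` C'; pose P2 := Q `&` ~` C.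
  have cP1 : compact P1.
    have clP1 : closed P1 by exact: closedI.
    by apply: (subclosed_compact clP1 cQ) => z [].
  have cP2 : compact P2.
    have clP2 : closed P2 by apply: closedI => //; exact: open_closedC.
    by apply: (subclosed_compact clP2 cQ) => z [].
  have P12 : P1 `&` P2 = set0.
    apply/seteqP; split => // z [[Qz C'z] [_ nCz]].
    have : B z by rewrite BQC'.
    by rewrite BQC => -[].
  have [U1 [U2 [oU1 oU2 P1U1 P2U2 U12]]] := @sep_compact _ P1 P2 hT cP1 cP2 P12.
  have QU : Q `<=` U1 `|` U2.
    move=> z Qz; have [Cz|nCz] := pselect (C z); last by right; apply: P2U2.
    have : B z by rewrite BQC.
    by rewrite BQC' => -[_ C'z]; left; apply: P1U1.
  have [A [[FA Ax0] AU]] := key _ (openU oU1 oU2) QU.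
  have nU12 : forall z, U1 z -> U2 z -> False.
    by move=> z U1z U2z; have : (U1 `&` U2) z by []; rewrite U12.
  have [U1x0|U2x0] := AU x0 Ax0.
  - have QU1 : Q `<=` U1.
      move=> z Qz; suff : (A `&` U1) z by case.
      by apply: Qz; split => //; exact: (FU _ _ U2).
    apply/seteqP; split; first by rewrite BQC => z [].
    move=> z Qz; have [Cz|nCz] := pselect (C z); first by rewrite BQC.
    by exfalso; apply: (nU12 z); [exact: QU1|exact: P2U2].
  - have QU2 : Q `<=` U2.
      move=> z Qz; suff : (A `&` U2) z by case.
      apply: Qz; split => //; apply: (FU _ _ U1) => //; first by rewrite setIC.
      by rewrite setUC.
    exfalso; have : Q b by move: Bb; rewrite BQC => -[].
    move=> Qb; apply: (nU12 b); last exact: QU2.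
    by apply: P1U1; move: Bb; rewrite BQC' => -[].
have QC : Q `<=` connected_component [set: T] x0.
  exact: connected_component_max.
have [A [[[AW clA clWA] Ax0] AO]] := key O oO (subset_trans QC CO).
exists A; split => //.
- exact: subclosed_compact clA cW AW.
- have -> : A = O `&` ~` (W `\` A).
    apply/seteqP; split => z.
      by move=> Az; split; [exact: AO| move=> []].
    move=> [Oz] /not_andP [/(_ (OW _ Oz)) []|]; by move=> /contrapT.
  by apply: openI => //; exact: closed_openC.
Qed.

Lemma compact_nbhs_of_compact {T : topologicalType} (K : set T) :
  locally_compact [set: T] -> compact K -> exists W, compact W /\ K `<=` W°.
Proof.
move=> lc cK.
have h : forall x : T, exists U : set T, nbhs x U /\ compact U.
  move=> x; have [U hU [cU _]] := lc x I.
  by exists U; split => //; move: hU; rewrite withinET.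
pose g x := projT1 (cid (h x)).
have gP x : nbhs x (g x) /\ compact (g x) := projT2 (cid (h x)).
have [] := cover_compact_gen cK _ K (fun x => (g x)°).
- by move=> i _; exact: open_interior.
- by move=> x Kx; exists x => //; exact: (gP x).1.
move=> D' _ KD'.
exists (\bigcup_(i in [set` D']) g i); split.
- by rewrite bigcup_fset; apply: bigsetU_compact => i _; exact: (gP i).2.
- move=> z /KD' [i /= iD gz]; apply: filterS gz => w gw; by exists i.
Qed.

Lemma sub_cst_continuous {G : topologicalZmodType} (h : G) :
  continuous (fun z : G => z - h).
Proof.
move=> z; apply: (@continuous_comp _ _ _ (fun z => (z, h)) (fun p : G * G => p.1 - p.2)).
  by apply: cvg_pair; [exact: cvg_id|exact: cvg_cst].
exact: sub_continuous.
Qed.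

Lemma open_subgroup_in {G : topologicalZmodType} (A : set G) :
  compact A -> open A -> A 0 -> hausdorff_space G ->
  exists H : set G, [/\ compact H, open H, H 0 &
    forall x y, H x -> H y -> H (x - y)].
Proof.
move=> cA oA A0 hG.
have h : forall a, exists PQ : set G * set G, A a ->
   [/\ nbhs a PQ.1, nbhs 0 PQ.2 & forall x v, PQ.1 x -> PQ.2 v -> A (x + v)].
  move=> a; have [Aa|nAa] := pselect (A a); last by exists (set0, set0).
  have : nbhs (a + 0) A by rewrite addr0; apply: open_nbhs_nbhs.
  move=> /(@add_continuous G (a, 0)) [[P Q]] /= [Pa Q0] PQ.
  exists (P, Q) => _; split => // x v Px Qv.
  by apply: (PQ (x, v)).
pose g x := projT1 (cid (h x)).
have gP x : A x -> _ := projT2 (cid (h x)).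
have [] := cover_compact_gen cA _ A (fun x => (g x).1°).
- by move=> i _; exact: open_interior.
- by move=> x Ax; exists x => //; case: (gP x Ax).
move=> D' D'A AD'.
pose V := \bigcap_(a in [set` D']) (g a).2.
have V0 : nbhs (0 : G) V.
  apply: filter_bigI => a /D'A/set_mem Aa; by case: (gP a Aa).
pose V' := V `&` ((fun x => - x) @^-1` V).
have V'0 : nbhs (0 : G) V'.
  apply: filterI => //.
  have : nbhs (- (0 : G)) V by rewrite oppr0.
  exact: (@opp_continuous G 0).
have AV : forall x v, A x -> V' v -> A (x + v).
  move=> x v /AD' [a /= aD ga] [Vv _].
  have Aa : A a by exact/set_mem/D'A.
  case: (gP a Aa) => _ _; apply; first exact: interior_subset.
  exact: Vv.
have V'N : forall v, V' v -> V' (- v).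
  by move=> v [Vv Vnv]; split => //=; rewrite opprK.
pose H := [set y : G | forall x, A x <-> A (x + y)].
have HB : forall x y, H x -> H y -> H (x - y).
  move=> x y Hx Hy z.
  have e : z + (x - y) = z - y + x by rewrite addrA addrAC.
  rewrite e -(Hx (z - y)); split.
    by move=> Az; apply/(Hy (z - y)); rewrite subrK.
  by move=> /(Hy (z - y)); rewrite subrK.
have H0 : H 0 by move=> x; rewrite addr0.
have HN : forall x, H x -> H (- x) by move=> x Hx; rewrite -sub0r; exact: HB.
have HD : forall x y, H x -> H y -> H (x + y).
  by move=> x y Hx Hy; rewrite -(opprK y); apply: HB => //; exact: HN.
have V'H : V' `<=` H.
  move=> v V'v x; split; first by move=> Ax; exact: AV.
  move=> Axv; have := AV _ _ Axv (V'N _ V'v).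
  by rewrite addrK.
have HA : H `<=` A by move=> y /(_ 0); rewrite add0r => /iffLR; apply.
have nbhsH : forall y, nbhs y ((fun z => z - y) @^-1` V').
  move=> y; apply: (@sub_cst_continuous G y y).
  by rewrite subrr.
have oH : open H.
  rewrite openE => y Hy; rewrite /interior.
  apply: filterS (nbhsH y) => z /= /V'H Hzy.
  by have := HD _ _ Hzy Hy; rewrite subrK.
have clH : closed H.
  rewrite -openC openE => y nHy; rewrite /interior.
  apply: filterS (nbhsH y) => z /= /V'H Hzy Hz.
  apply: nHy; have := HB _ _ Hz Hzy.
  by rewrite opprB addrC subrK.
exists H; split => //.
exact: subclosed_compact clH cA HA.
Qed.

Lemma bigsetU_seqP {T : Type} {I : eqType} (s : seq I) (F : I -> set T) (z : T) :
  (\big[setU/set0]_(x <- s) F x) z <-> exists2 y, y \in s & F y z.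
Proof.
elim: s => [|x s IH]; first by rewrite big_nil; split => // -[].
rewrite big_cons; split.
  move=> [Fz|/IH [y ys Fy]]; first by exists x => //; rewrite mem_head.
  by exists y => //; rewrite in_cons ys orbT.
move=> [y]; rewrite in_cons => /orP [/eqP <-|ys] Fy; first by left.
by right; apply/IH; exists y.
Qed.

Lemma bigsetU_open {T : topologicalType} {I : eqType} (s : seq I) (F : I -> set T) :
  (forall x, open (F x)) -> open (\big[setU/set0]_(x <- s) F x).
Proof.
move=> oF; have -> : \big[setU/set0]_(x <- s) F x = \bigcup_(y in [set y | y \in s]) F y.
  apply/seteqP; split => z; first by move=> /bigsetU_seqP [y ys Fy]; exists y.
  by move=> [y ys Fy]; apply/bigsetU_seqP; exists y.
exact: bigcup_open.
Qed.

Lemma open_coset {G : topologicalZmodType} (V : set G) (x : G) :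
  open V -> open [set x + y | y in V].
Proof.
move=> oV; have -> : [set x + y | y in V] = (fun z => z - x) @^-1` V.
  apply/seteqP; split => z /=.
    by move=> [y Vy <-]; rewrite (addrC x y) addrK.
  by move=> Vz; exists (z - x) => //; rewrite addrC subrK.
by move: oV; apply: (proj1 (continuousP _)); exact: sub_cst_continuous.
Qed.

Lemma open_measurable_Borel {G : topologicalZmodType} {U : set G} :
  open U -> measurable (U : set (Borel G)).
Proof. by move=> oU; apply: sub_sigma_algebra. Qed.

Lemma coset_count (R : realType) (G : topologicalZmodType)
    (mu : {measure set (Borel G) -> \bar R}) (V : set G) (v : R) :
  haar_measure mu -> open V -> V 0 ->
  (forall x y, V x -> V y -> V (x - y)) -> mu V = v%:E ->
  forall s : seq G, exists n : nat,
    mu (\big[setU/set0]_(x <- s) [set x + y | y in V]) = (n%:R * v)%:E.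
Proof.
move=> [_ _ _ _ trans] oV V0 VB muV.
have VN : forall x, V x -> V (- x) by move=> x Vx; rewrite -sub0r; exact: VB.
have VD : forall x y, V x -> V y -> V (x + y).
  by move=> x y Vx Vy; rewrite -(opprK y); apply: VB => //; exact: VN.
have mV : measurable (V : set (Borel G)) by exact: open_measurable_Borel.
have muC : forall x, mu [set x + y | y in V] = v%:E.
  by move=> x; rewrite -muV; exact: (trans x V mV).
elim => [|x s [n IH]].
  by exists 0%N; rewrite big_nil measure0 mul0r.
rewrite big_cons.
set U := \big[setU/set0]_(x <- s) [set x + y | y in V].
have [[y ys [z [[v1 Vv1 e1] [v2 Vv2 e2]]]]|nI] :=
   pselect (exists2 y, y \in s & [set x + y | y in V] `&` [set y + v | v in V] !=set0).
  exists n; rewrite setUidr // => w [u Vu <-].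
  apply/bigsetU_seqP; exists y => //.
  exists (v2 - v1 + u); first by apply: VD => //; exact: VB.
  by rewrite !addrA e2 -e1 addrK.
have mU : measurable (U : set (Borel G)).
  apply: open_measurable_Borel; apply: bigsetU_open => w; exact: open_coset.
have mC : measurable ([set x + y | y in V] : set (Borel G)).
  by apply: open_measurable_Borel; exact: open_coset.
exists n.+1; rewrite measureU //.
  apply: (@eq_trans _ _ (v%:E + (n%:R * v)%:E)).
    by congr (_ + _); [exact: muC x|exact: IH].
  by rewrite -EFinD mulrSr mulrDl mul1r addrC.
apply/seteqP; split => // w [Cw /bigsetU_seqP [y ys Cy]].
by apply: nI; exists y => //; exists w.
Qed.

Lemma compact_open_subgroup (G : topologicalZmodType) :
  LCA_group G -> compact (@identity_component G) ->
  exists H : set G, [/\ compact H, open H, H 0 &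
    forall x y, H x -> H y -> H (x - y)].
Proof.
move=> [hG lc] cG0.
have [W [cW G0W]] := compact_nbhs_of_compact _ lc cG0.
have [A [cA oA A0 AO]] := @clopen_in_nbhs G W (W°) 0 hG cW
  (@open_interior _ W) (@interior_subset _ W) G0W.
exact: open_subgroup_in cA oA A0 hG.
Qed.

Lemma cover_by_cosets {G : topologicalZmodType} {K V : set G} :
  compact K -> open V -> V 0 ->
  exists s : seq G, (forall x, x \in s -> K x) /\
    K `<=` \big[setU/set0]_(x <- s) [set x + y | y in V].
Proof.
move=> cK oV V0.
have [] := cover_compact_gen cK _ K (fun x => [set x + y | y in V]).
- by move=> i _; exact: open_coset.
- by move=> x Kx; exists x => //; exists 0 => //; rewrite addr0.
move=> D' D'K KD'.
exists (finmap.enum_fset D'); split.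
  by move=> x xs; apply/set_mem/D'K.
by rewrite -bigcup_fset.
Qed.

Theorem proposition2p8 (R : realType) (G : topologicalZmodType) :
  LCA_group G ->
  compact (@identity_component G) ->
  forall (alpha : G -> G), topological_automorphism alpha ->
  forall (mu : {measure set (Borel G) -> \bar R}), haar_measure mu ->
  forall c : R, 0 < c ->
    (forall S : set (Borel G), measurable S -> mu (alpha @` S) = (c%:E * mu S)%E) ->
  exists q : rat, c = ratr q.
Proof.
move=> LCAG cG0 alpha [αadd [αcont [β [αβ βα βcont]]]] mu hmu c c0 hc.
have [H [cH oH H0 HB]] := compact_open_subgroup _ LCAG cG0.
have [hG _] := LCAG.
have α0 : alpha 0 = 0.
  have : alpha 0 + 0 = alpha 0 + alpha 0 by rewrite addr0 -αadd addr0.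
  by move/addrI.
have αB : forall x y, alpha (x - y) = alpha x - alpha y.
  by move=> x y; rewrite -[in alpha x](subrK y x) (αadd (x - y) y) addrK.
pose H' := alpha @` H.
have H'E : H' = β @^-1` H.
  apply/seteqP; split => z /=; first by move=> [y Hy <-]; rewrite αβ.
  by move=> Hbz; exists (β z) => //; rewrite βα.
have oH' : open H' by rewrite H'E; exact: (proj1 (continuousP _) βcont).
have cH' : compact H'.
  by apply: continuous_compact => //; exact: continuous_subspaceT.
have H'0 : H' 0 by exists 0.
have H'B : forall x y, H' x -> H' y -> H' (x - y).
  by move=> _ _ [x Hx <-] [y Hy <-]; exists (x - y); [exact: HB|exact: αB].
have subD : forall (S : set G), S 0 -> (forall x y, S x -> S y -> S (x - y)) ->
    forall x y, S x -> S y -> S (x + y).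
  move=> S S0 SB x y Sx Sy.
  by have := SB x (0 - y) Sx (SB 0 y S0 Sy); rewrite sub0r opprK.
pose V := H `&` H'.
have oV : open V := openI oH oH'.
have V0 : V 0 by split.
have VB : forall x y, V x -> V y -> V (x - y).
  by move=> x y [? ?] [? ?]; split; [exact: HB|exact: H'B].
have [hfin _ hin [Op [oO muO]] _] := hmu.
have mH : measurable (H : set (Borel G)) := open_measurable_Borel oH.
have mH' : measurable (H' : set (Borel G)) := open_measurable_Borel oH'.
have mV : measurable (V : set (Borel G)) := open_measurable_Borel oV.
have VH : (mu V <= mu H)%E.
  by apply: le_measure; [exact: mem_set|exact: mem_set|move=> z []].
have muV : mu V = (fine (mu V))%:E.
  rewrite fineK // ge0_fin_numE //; exact: le_lt_trans VH (hfin H cH).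
set v := fine (mu V) in muV.
have [sH [sHH HsH]] := cover_by_cosets cH oV V0.
have [m muH] := @coset_count R G mu V v hmu oV V0 VB muV sH.
have eH : \big[setU/set0]_(x <- sH) [set x + y | y in V] = H.
  apply/seteqP; split => //; move=> z /bigsetU_seqP [x xs [y [Hy _] <-]].
  by apply: subD => //; exact: sHH.
rewrite eH in muH.
have [sH' [sHH' HsH']] := cover_by_cosets cH' oV V0.
have [n muH'] := @coset_count R G mu V v hmu oV V0 VB muV sH'.
have eH' : \big[setU/set0]_(x <- sH') [set x + y | y in V] = H'.
  apply/seteqP; split => //; move=> z /bigsetU_seqP [x xs [y [_ H'y] <-]].
  by apply: subD => //; exact: sHH'.
rewrite eH' in muH'.
have v0 : 0 < v.
  have v0 : 0 <= v by rewrite /v fine_ge0.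
  rewrite lt0r v0 andbT; apply/negP => /eqP v0'.
  have : (mu Op <= 0)%E.
    rewrite (hin Op oO); apply: ge_ereal_sup => _ [K [cK KO] <-].
    have [sK [_ KsK]] := cover_by_cosets cK oV V0.
    have [k muK] := @coset_count R G mu V v hmu oV V0 VB muV sK.
    have mK : measurable (K : set (Borel G)).
      rewrite -(setCK K); apply: measurableC; apply: open_measurable_Borel.
      exact/closed_openC/(compact_closed hG cK).
    have mU : measurable (\big[setU/set0]_(x <- sK) [set x + y | y in V] : set (Borel G)).
      by apply: open_measurable_Borel; apply: bigsetU_open => w; exact: open_coset.
    set UK := \big[setU/set0]_(x <- sK) [set x + y | y in V] in KsK muK mU.
    have le : (mu K <= mu UK)%E.
      by apply: le_measure; [exact: mem_set|exact: mem_set|exact: KsK].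
    by apply: (le_trans le); rewrite muK v0' mulr0.
  by rewrite leNgt muO.
have := hc H mH.
rewrite -/H' muH muH' -EFinM => -[e].
have m0 : m%:R != 0 :> R.
  apply/eqP => m0; move: VH; rewrite muH muV m0 mul0r lee_fin.
  by rewrite leNgt v0.
have e' : c * m%:R = n%:R.
  apply: (mulIf (lt0r_neq0 v0)); by rewrite e mulrA.
exists (n%:R / m%:R).
by rewrite rmorphM /= fmorphV /= !rmorph_nat -e' mulfK.
Qed.
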